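(* Let $T$, $\mathcal{S}=\mathcal{S}_+\cup\mathcal{S}_-$, $\Psi$, $U$, $\lambda,\mu$, $P_\lambda,P_\mu$ and $W$ be as in the context. Consider the discrete-time QBD with phase space $\mathcal{S}$ and transition blocks $$C_{-1}=\begin{bmatrix}0&(I-\mu^{-1}T_{++})^{-1}P_{\mu+-}\\0&W\end{bmatrix},\quad C_0=\begin{bmatrix}0&(I-\mu^{-1}T_{++})^{-1}P_{\lambda+-}\\0&0\end{bmatrix},\quad C_1=\begin{bmatrix}(I-\mu^{-1}T_{++})^{-1}P_{\lambda++}&0\\0&0\end{bmatrix}.$$ Then its $\mathcal{G}$-matrix is $$\mathcal{G}_C=\begin{bmatrix}0&\Psi\\0&W\end{bmatrix}.$$
   Context: $T$ is the generator of a continuous-time Markov chain on a finite set $\mathcal{S}=\mathcal{S}_+\cup\mathcal{S}_-$ (disjoint, both nonempty), partitioned into blocks $T_{++},T_{+-},T_{-+},T_{--}$ according to $\mathcal{S}_\pm$. $\Psi$ is the minimal nonnegative solution of $T_{+-}+\Psi T_{--}+T_{++}\Psi+\Psi T_{-+}\Psi=0$ (the first-return probability matrix of the unit-rate fluid queue with phase generator $T$, rates $+1$ on $\mathcal{S}_+$ and $-1$ on $\mathcal{S}_-$), and $U:=T_{--}+T_{-+}\Psi$. $\lambda,\mu>0$ satisfy $\lambda,\mu\ge\max_i|T_{ii}|$; $P_\lambda:=I+\lambda^{-1}T$, $P_\mu:=I+\mu^{-1}T$ with blocks $P_{\lambda++}$ etc.; $W:=(I+\mu^{-1}U)(I-\lambda^{-1}U)^{-1}$.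 A discrete-time quasi-birth-death process (QBD) with transition blocks $L_{-1},L_0,L_1$ is a Markov chain $\{(Y_n,\kappa_n)\}$ on $\mathbb{Z}\times\mathcal{S}$ with $\mathbb{P}[Y_n=k+d,\kappa_n=j\mid Y_{n-1}=k,\kappa_{n-1}=i]=(L_d)_{ij}$ for $d\in\{-1,0,1\}$. Its $\mathcal{G}$-matrix has entries $\mathcal{G}_{ij}=\mathbb{P}[\theta<\infty,\kappa_\theta=j\mid Y_0=k,\kappa_0=i]$ with $\theta=\inf\{n>0:Y_n=k-1\}$. Matrices are partitioned into blocks according to $\mathcal{S}_+,\mathcal{S}_-$. *)

(* Defs.v *)
From HB Require Import structures.
From mathcomp Require Import all_boot all_order all_algebra.
From mathcomp Require Import all_classical all_reals topology normedtype sequences.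
Set Implicit Arguments. Unset Strict Implicit. Unset Printing Implicit Defensive.
Import Order.TTheory GRing.Theory Num.Theory.
Local Open Scope ring_scope.
Import numFieldNormedType.Exports.
Local Open Scope classical_set_scope.

Section Defs.
Variable R : realType.

(* Phase space S = S_+ (first p indices) ∪ S_- (last m indices) = 'I_(p+m);
   blocks: ulsubmx = ++, ursubmx = +-, dlsubmx = -+, drsubmx = --. *)

Definition is_generator n (T : 'M[R]_n) : Prop :=
  (forall i j, i != j -> 0 <= T i j) /\ (forall i, \sum_j T i j = 0).

Definition nonnegmx m n (A : 'M[R]_(m, n)) : Prop := forall i j, 0 <= A i j.
Definition lemx m n (A B : 'M[R]_(m, n)) : Prop := forall i j, A i j <= B i j.

Definition riccati p m (T : 'M[R]_(p + m)) (X : 'M[R]_(p, m)) : Prop :=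
  ursubmx T + X *m drsubmx T + ulsubmx T *m X + X *m dlsubmx T *m X = 0.

Definition minimal_nonneg_sol p m (T : 'M[R]_(p + m)) (Psi : 'M[R]_(p, m)) : Prop :=
  [/\ nonnegmx Psi, riccati T Psi &
      forall X, nonnegmx X -> riccati T X -> lemx Psi X].

Section QBD.
Variables (k : nat) (Am1 A0 A1 : 'M[R]_k).

(* taboo n l : (i,j) entry = P[Y_n = Y_0 + l, kappa_n = j, Y_t >= Y_0 for 0<=t<=n
   | kappa_0 = i], i.e. the sum over all admissible paths of products of the
   transition probabilities (L_d)_{ij}. *)
Fixpoint taboo (n : nat) : nat -> 'M[R]_k :=
  match n with
  | 0 => fun l => if l == 0%N then 1%:M else 0
  | n'.+1 => fun l =>
      (if l is l'.+1 then taboo n' l' *m A1 else 0)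
      + taboo n' l *m A0 + taboo n' l.+1 *m Am1
  end.

(* (i,j) entry = P[theta = n+1, kappa_theta = j | Y_0 = level, kappa_0 = i] *)
Definition first_passage (n : nat) : 'M[R]_k := taboo n 0 *m Am1.

(* G_ij = P[theta < oo, kappa_theta = j | kappa_0 = i]
        = sum_{n >= 0} P[theta = n+1, kappa_theta = j | kappa_0 = i] *)
Definition is_Gmatrix (G : 'M[R]_k) : Prop :=
  forall i j, (fun N : nat => \sum_(n < N) (first_passage n i j : R)) @ \oo --> (G i j : R).

End QBD.
End Defs.

(* Main.v *)
Require Import Defs.
From HB Require Import structures.
From mathcomp Require Import all_boot all_order all_algebra.
From mathcomp Require Import all_classical all_reals topology normedtype sequences.
From mathcomp Require Import lra ring zify.
Import Order.TTheory GRing.Theory Num.Theory.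
Local Open Scope ring_scope.
Module M_A.
Set Implicit Arguments. Unset Strict Implicit. Unset Printing Implicit Defensive.
Import numFieldNormedType.Exports.
Local Open Scope classical_set_scope.

Section An.
Variable R : realType.

Lemma cvg_sumr (I : Type) (r : seq I) (F : I -> nat -> R) (L : I -> R) :
  (forall i, F i @ \oo --> L i) ->
  (fun k => \sum_(i <- r) F i k) @ \oo --> \sum_(i <- r) L i.
Proof.
move=> H; elim: r => [|i r IHr].
  rewrite big_nil; under eq_cvg do rewrite big_nil; exact: cvg_cst.
rewrite big_cons; under eq_cvg do rewrite big_cons.
exact: cvgD.
Qed.

Lemma lim_le_ub (u : nat -> R) (l : R) b : u @ \oo --> l -> (forall n, u n <= b) -> l <= b.
Proof.
move=> H Hb; have <- := cvg_lim _ H => //.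
apply: limr_le; first by apply/cvg_ex; exists l.
by near=> n; apply: Hb.
Unshelve. all: by end_near. Qed.

Lemma lim_ge_lb (u : nat -> R) (l : R) b : u @ \oo --> l -> (forall n, b <= u n) -> b <= l.
Proof.
move=> H Hb; have <- := cvg_lim _ H => //.
apply: limr_ge; first by apply/cvg_ex; exists l.
by near=> n; apply: Hb.
Unshelve. all: by end_near. Qed.

Lemma mono_cvg (u : nat -> R) b : (forall n, u n <= u n.+1) -> (forall n, u n <= b) ->
  exists l : R, u @ \oo --> l.
Proof.
move=> Hu Hb; exists (sup (range u)); apply: nondecreasing_cvgn.
  by apply/nondecreasing_seqP.
by exists b => _ [n _ <-].
Qed.

Lemma mono_le_lim (u : nat -> R) (l : R) : (forall n, u n <= u n.+1) -> u @ \oo --> l ->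
  forall n, u n <= l.
Proof.
move=> Hu H n; apply: (lim_ge_lb (u := fun k => u (k + n)%N)).
  by rewrite (cvg_shiftn n u).
move=> k; have /nondecreasing_seqP Hnd := Hu; apply: Hnd; exact: leq_addl.
Qed.

Lemma mono_subseq (u : nat -> R) (l : R) : (forall n, u n <= u n.+1) ->
  (fun N => u (N.+1).*2) @ \oo --> l -> u @ \oo --> l.
Proof.
move=> Hu H.
have /nondecreasing_seqP Hnd := Hu.
have Hv : forall N, u (N.+1).*2 <= l.
  apply: mono_le_lim H => N; apply: Hnd; by rewrite leq_double.
apply/cvgrPdist_le => e e0.
have [N0 _ HN0] := (cvgrPdist_le _ _).1 H e e0.
exists (N0.+1).*2 => // n /= hn.
have := HN0 N0 (leqnn N0) => /=.
have h1 : u (N0.+1).*2 <= u n by apply: Hnd.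
have h2 : u n <= l.
  apply: (le_trans _ (Hv n)); apply: Hnd.
  by rewrite -addnn addSn addnS; apply: leqW; apply: leqW; exact: leq_addr.
have h3 := Hv N0.
move=> h; rewrite ger0_norm ?subr_ge0 // in h; rewrite ger0_norm; lra.
Qed.

Definition mxcvg a b (Z : nat -> 'M[R]_(a,b)) (L : 'M[R]_(a,b)) :=
  forall i j, (fun k => Z k i j) @ \oo --> L i j.

Lemma mxcvg_cst a b (L : 'M[R]_(a,b)) : mxcvg (fun _ => L) L.
Proof. by move=> i j; exact: cvg_cst. Qed.

Lemma mxcvgD a b (Z Y : nat -> 'M[R]_(a,b)) L M :
  mxcvg Z L -> mxcvg Y M -> mxcvg (fun k => Z k + Y k) (L + M).
Proof.
move=> h1 h2 i j; rewrite mxE; under eq_cvg do rewrite mxE.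
exact: cvgD.
Qed.

Lemma mxcvgZ a b (c : R) (Z : nat -> 'M[R]_(a,b)) L :
  mxcvg Z L -> mxcvg (fun k => c *: Z k) (c *: L).
Proof.
move=> h1 i j; rewrite mxE; under eq_cvg do rewrite mxE.
by apply: cvgM; [exact: cvg_cst | exact: h1].
Qed.

Lemma mxcvgM a b c (Z : nat -> 'M[R]_(a,b)) (Y : nat -> 'M[R]_(b,c)) L M :
  mxcvg Z L -> mxcvg Y M -> mxcvg (fun k => Z k *m Y k) (L *m M).
Proof.
move=> h1 h2 i j; rewrite mxE; under eq_cvg do rewrite mxE.
apply: (cvg_sumr (F := fun l k => Z k i l * Y k l j)) => l.
exact: cvgM.
Qed.

Lemma mxcvgS a b (Z : nat -> 'M[R]_(a,b)) L :
  mxcvg Z L -> mxcvg (fun k => Z k.+1) L.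
Proof.
move=> h i j; have := h i j; rewrite -(cvg_shiftS (fun k => Z k i j)) //.
Qed.

Lemma mxcvg_uniq a b (Z : nat -> 'M[R]_(a,b)) L M :
  mxcvg Z L -> mxcvg Z M -> L = M.
Proof.
move=> h1 h2; apply/matrixP => i j.
by rewrite -(cvg_lim _ (h1 i j)) // -(cvg_lim _ (h2 i j)).
Qed.

Lemma mxcvg_le a b (Z : nat -> 'M[R]_(a,b)) L Y :
  mxcvg Z L -> (forall k, lemx (Z k) Y) -> lemx L Y.
Proof. by move=> h hY i j; apply: (lim_le_ub (h i j)) => k; exact: hY. Qed.

Lemma mxcvg_ge a b (Z : nat -> 'M[R]_(a,b)) L Y :
  mxcvg Z L -> (forall k, lemx Y (Z k)) -> lemx Y L.
Proof. by move=> h hY i j; apply: (lim_ge_lb (h i j)) => k; exact: hY. Qed.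

Lemma mono_mxcvg a b (Z : nat -> 'M[R]_(a,b)) Y :
  (forall k, lemx (Z k) (Z k.+1)) -> (forall k, lemx (Z k) Y) ->
  exists L, mxcvg Z L.
Proof.
move=> hm hb.
exists (\matrix_(i,j) sup (range (fun k => Z k i j))) => i j; rewrite mxE.
apply: nondecreasing_cvgn; first by apply/nondecreasing_seqP => k; exact: hm.
by exists (Y i j) => _ [k _ <-]; exact: hb.
Qed.

End An.

End M_A.
Import M_A.

Module M_B.
Set Implicit Arguments. Unset Strict Implicit. Unset Printing Implicit Defensive.
Import numFieldNormedType.Exports.

Section Mx.
Variable R : realType.

Lemma nonneg_mul a b c (A : 'M[R]_(a,b)) (B : 'M[R]_(b,c)) :
  nonnegmx A -> nonnegmx B -> nonnegmx (A *m B).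
Proof. by move=> hA hB i j; rewrite mxE; apply: sumr_ge0 => k _; apply: mulr_ge0. Qed.

Lemma nonneg_add a b (A B : 'M[R]_(a,b)) : nonnegmx A -> nonnegmx B -> nonnegmx (A + B).
Proof. by move=> hA hB i j; rewrite mxE; apply: addr_ge0. Qed.

Lemma nonneg0 a b : nonnegmx (0 : 'M[R]_(a,b)).
Proof. by move=> i j; rewrite mxE. Qed.

Lemma lemxE a b (A B : 'M[R]_(a,b)) : lemx A B <-> nonnegmx (B - A).
Proof.
split=> h i j; have := h i j; rewrite ?mxE; lra.
Qed.

Lemma lemx_refl a b (A : 'M[R]_(a,b)) : lemx A A.
Proof. by move=> i j. Qed.

Lemma lemx_trans a b (A B C : 'M[R]_(a,b)) : lemx A B -> lemx B C -> lemx A C.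
Proof. by move=> h1 h2 i j; apply: le_trans (h1 i j) (h2 i j). Qed.

Lemma lemx_add a b (A B C D : 'M[R]_(a,b)) : lemx A B -> lemx C D -> lemx (A + C) (B + D).
Proof. by move=> h1 h2 i j; rewrite !mxE; apply: lerD. Qed.

Lemma lemx_mull a b c (A : 'M[R]_(a,b)) (B C : 'M[R]_(b,c)) :
  nonnegmx A -> lemx B C -> lemx (A *m B) (A *m C).
Proof.
move=> hA h i j; rewrite !mxE; apply: ler_sum => k _; apply: ler_wpM2l => //.
Qed.

Lemma lemx_mulr a b c (A : 'M[R]_(b,c)) (B C : 'M[R]_(a,b)) :
  nonnegmx A -> lemx B C -> lemx (B *m A) (C *m A).
Proof.
move=> hA h i j; rewrite !mxE; apply: ler_sum => k _; apply: ler_wpM2r => //.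
Qed.

Lemma lemx_scale a b (c : R) (A B : 'M[R]_(a,b)) : 0 <= c -> lemx A B -> lemx (c *: A) (c *: B).
Proof. by move=> hc h i j; rewrite !mxE; apply: ler_wpM2l. Qed.

Lemma nonneg_scale a b (c : R) (A : 'M[R]_(a,b)) : 0 <= c -> nonnegmx A -> nonnegmx (c *: A).
Proof. by move=> hc h i j; rewrite !mxE; apply: mulr_ge0. Qed.

Lemma lemx_antisym a b (A B : 'M[R]_(a,b)) : lemx A B -> lemx B A -> A = B.
Proof. by move=> h1 h2; apply/matrixP => i j; apply/eqP; rewrite eq_le h1 h2. Qed.

Section Zmx.
Variables (n : nat) (M : 'M[R]_n).
Hypothesis offd : forall i j, i != j -> M i j <= 0.
Hypothesis rows : forall i, 0 < \sum_j M i j.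

Lemma zmx_monotone c (Y : 'M[R]_(n,c)) : nonnegmx (M *m Y) -> nonnegmx Y.
Proof.
move=> h i j.
case: (@arg_minP _ _ 'I_n i xpredT (fun i => Y i j)) => // i0 _ Hmin.
suff : 0 <= Y i0 j by move=> H0; apply: le_trans H0 (Hmin i isT).
rewrite leNgt; apply/negP => Hneg.
have := h i0 j; rewrite mxE => H1.
have H2 : \sum_k M i0 k * Y k j <= \sum_k M i0 k * Y i0 j.
  apply: ler_sum => k _; case: (eqVneq i0 k) => [->//|ne].
  by apply: ler_wnM2l; [exact: offd | exact: Hmin].
have H3 : \sum_k M i0 k * Y i0 j < 0.
  by rewrite -mulr_suml pmulr_rlt0.
have := le_lt_trans H2 H3; rewrite ltNge H1 //.
Qed.

Lemma zmx_unit : M \in unitmx.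
Proof.
rewrite -unitmx_tr -row_free_unit -kermx_eq0; apply/eqP.
set K0 := kermx M^T.
have hK : M *m K0^T = 0 by rewrite -[M]trmxK -trmx_mul mulmx_ker trmx0.
have h1 : nonnegmx K0^T by apply: zmx_monotone; rewrite hK; exact: nonneg0.
have h2 : nonnegmx (- K0^T) by apply: zmx_monotone; rewrite mulmxN hK oppr0; exact: nonneg0.
apply/matrixP => i j; apply/eqP; rewrite mxE eq_le.
have := h1 j i; have := h2 j i; rewrite !mxE; move=> a b; apply/andP; split; lra.
Qed.

Lemma zmx_inv_nonneg : nonnegmx (invmx M).
Proof.
apply: zmx_monotone; rewrite mulmxV; last exact: zmx_unit.
by move=> i j; rewrite mxE; case: (i == j).
Qed.
End Zmx.

End Mx.

End M_B.
Import M_B.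

Module M_C.
Set Implicit Arguments. Unset Strict Implicit. Unset Printing Implicit Defensive.
Import numFieldNormedType.Exports.

Section Main.
Variables (R : realType) (p m : nat) (T : 'M[R]_(p + m)) (Psi : 'M[R]_(p, m)) (lam mu : R).
Hypotheses (hgen : is_generator T) (hPsi : minimal_nonneg_sol T Psi)
  (hlam : 0 < lam) (hmu : 0 < mu)
  (hTl : forall i, `|T i i| <= lam) (hTm : forall i, `|T i i| <= mu).

Local Notation Tpp := (ulsubmx T).
Local Notation Tpm := (ursubmx T).
Local Notation Tmp := (dlsubmx T).
Local Notation Tmm := (drsubmx T).
Local Notation ones n := (const_mx 1 : 'M[R]_(n,1)).

Lemma T_offd i j : i != j -> 0 <= T i j.
Proof. by case: hgen => h _; exact: h. Qed.

Lemma T_diag i : T i i <= 0.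
Proof.
case: hgen => _ h; have := h i; rewrite (bigD1 i) //=.
have : 0 <= \sum_(j | j != i) T i j.
  by apply: sumr_ge0 => j ji; apply: T_offd; rewrite eq_sym.
lra.
Qed.

Lemma T_diag_lam i : - lam <= T i i.
Proof. by have := hTl i; rewrite ler_norml => /andP[]. Qed.
Lemma T_diag_mu i : - mu <= T i i.
Proof. by have := hTm i; rewrite ler_norml => /andP[]. Qed.

Lemma rowsum_p : Tpp *m ones p + Tpm *m ones m = 0.
Proof.
apply/matrixP => i j; rewrite !mxE.
case: hgen => _ h; apply: etrans (h (lshift m i)); rewrite big_split_ord /=.
by congr (_ + _); apply: eq_bigr => k _; rewrite !mxE mulr1.
Qed.

Lemma rowsum_m : Tmp *m ones p + Tmm *m ones m = 0.
Proof.
apply/matrixP => i j; rewrite !mxE.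
case: hgen => _ h; apply: etrans (h (rshift p i)); rewrite big_split_ord /=.
by congr (_ + _); apply: eq_bigr => k _; rewrite !mxE mulr1.
Qed.

Lemma Tpm_nonneg : nonnegmx Tpm.
Proof. by move=> i j; rewrite !mxE; apply: T_offd; rewrite eq_lrshift. Qed.
Lemma Tmp_nonneg : nonnegmx Tmp.
Proof. by move=> i j; rewrite !mxE; apply: T_offd; rewrite eq_rlshift. Qed.

Lemma Tpp_shift_nonneg : nonnegmx (Tpp + mu%:M).
Proof.
move=> i j; rewrite !mxE; case: (eqVneq i j) => [->|ne] /=.
  by rewrite mulr1n; have := T_diag_mu (lshift m j); lra.
by rewrite mulr0n addr0; apply: T_offd; rewrite eq_lshift.
Qed.
Lemma Tmm_shift_nonneg : nonnegmx (Tmm + mu%:M).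
Proof.
move=> i j; rewrite !mxE; case: (eqVneq i j) => [->|ne] /=.
  by rewrite mulr1n; have := T_diag_mu (rshift p j); lra.
by rewrite mulr0n addr0; apply: T_offd; rewrite eq_rshift.
Qed.

Lemma ones_nonneg n : nonnegmx (ones n).
Proof. by move=> i j; rewrite mxE. Qed.

Definition ric (Z : 'M[R]_(p,m)) := Tpm + Z *m Tmm + Tpp *m Z + Z *m Tmp *m Z.

Definition Phi (Z : 'M[R]_(p,m)) :=
  (mu *+ 2)^-1 *: (Tpm + (Tpp + mu%:M) *m Z + Z *m (Tmm + mu%:M) + Z *m Tmp *m Z).

Lemma mu2_gt0 : 0 < mu *+ 2.
Proof. by rewrite pmulrn_lgt0. Qed.

Lemma Phi_ric Z : Phi Z = Z + (mu *+ 2)^-1 *: ric Z.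
Proof.
rewrite /Phi /ric mulmxDl mulmxDr mul_scalar_mx mul_mx_scalar.
move: (Tpp *m Z) (Z *m Tmm) (Z *m Tmp *m Z) => a b c.
apply/matrixP => i j; rewrite !mxE.
have : mu != 0 by rewrite gt_eqF.
by move=> hm0; field.
Qed.


Lemma Phi_fix Z : riccati T Z -> Phi Z = Z.
Proof. by rewrite /riccati => h; rewrite Phi_ric /ric h scaler0 addr0. Qed.

Lemma fix_Phi Z : Phi Z = Z -> riccati T Z.
Proof.
move=> h; have h1 : (mu *+ 2)^-1 *: ric Z = 0.
  by apply: (addrI Z); rewrite addr0 -Phi_ric.
move/eqP: h1; rewrite scaler_eq0 invr_eq0 (gt_eqF mu2_gt0) /= => /eqP.
by rewrite /riccati /ric.
Qed.

Lemma nonneg_le a b (Z1 Z2 : 'M[R]_(a,b)) : nonnegmx Z1 -> lemx Z1 Z2 -> nonnegmx Z2.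
Proof. by move=> h1 h2 i j; apply: le_trans (h1 i j) (h2 i j). Qed.

Lemma mu2inv_ge0 : 0 <= (mu *+ 2)^-1.
Proof. by rewrite invr_ge0; apply: ltW; exact: mu2_gt0. Qed.

Lemma Phi_mono Z1 Z2 : nonnegmx Z1 -> lemx Z1 Z2 -> lemx (Phi Z1) (Phi Z2).
Proof.
move=> h1 h12; have h2 := nonneg_le h1 h12.
apply: lemx_scale; first exact: mu2inv_ge0.
apply: lemx_add; first apply: lemx_add; first apply: lemx_add.
- exact: lemx_refl.
- by apply: lemx_mull => //; exact: Tpp_shift_nonneg.
- by apply: lemx_mulr => //; exact: Tmm_shift_nonneg.
- apply: (@lemx_trans _ _ _ _ (Z1 *m Tmp *m Z2)).
    by apply: lemx_mull => //; apply: nonneg_mul => //; exact: Tmp_nonneg.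
  apply: lemx_mulr => //; apply: lemx_mulr => //; exact: Tmp_nonneg.
Qed.

Lemma Phi_nonneg Z : nonnegmx Z -> nonnegmx (Phi Z).
Proof.
move=> h; apply: nonneg_scale; first exact: mu2inv_ge0.
apply: nonneg_add; first apply: nonneg_add; first apply: nonneg_add.
- exact: Tpm_nonneg.
- by apply: nonneg_mul => //; exact: Tpp_shift_nonneg.
- by apply: nonneg_mul => //; exact: Tmm_shift_nonneg.
- by apply: nonneg_mul => //; apply: nonneg_mul => //; exact: Tmp_nonneg.
Qed.

Definition Zit k := iter k Phi 0.

Lemma Zit_nonneg k : nonnegmx (Zit k).
Proof. by elim: k => [|k IH] /=; [exact: nonneg0 | exact: Phi_nonneg]. Qed.

Lemma Zit_incr k : lemx (Zit k) (Zit k.+1).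
Proof.
elim: k => [|k IH].
  by apply/lemxE; rewrite subr0; apply: Phi_nonneg; exact: nonneg0.
by apply: Phi_mono => //; exact: Zit_nonneg.
Qed.

Lemma Zit_le Y : nonnegmx Y -> lemx (Phi Y) Y -> forall k, lemx (Zit k) Y.
Proof.
move=> hY hPY; elim => [|k IH] /=.
  by apply/lemxE; rewrite subr0.
apply: lemx_trans hPY; apply: Phi_mono => //; exact: Zit_nonneg.
Qed.

Lemma Phi_cvg Z L : mxcvg Z L -> mxcvg (fun k => Phi (Z k)) (Phi L).
Proof.
move=> h; apply: mxcvgZ; apply: mxcvgD; first apply: mxcvgD; first apply: mxcvgD.
- exact: mxcvg_cst.
- by apply: mxcvgM => //; exact: mxcvg_cst.
- by apply: mxcvgM => //; exact: mxcvg_cst.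
- by apply: mxcvgM => //; apply: mxcvgM => //; exact: mxcvg_cst.
Qed.

Lemma Psi_nonneg : nonnegmx Psi.
Proof. by case: hPsi. Qed.

Lemma Zit_lim : exists L, [/\ mxcvg Zit L, nonnegmx L & Phi L = L].
Proof.
have hP : Phi Psi = Psi by apply: Phi_fix; case: hPsi.
have [L hL] : exists L, mxcvg Zit L.
  apply: (@mono_mxcvg _ _ _ _ Psi); first exact: Zit_incr.
  apply: Zit_le; first exact: Psi_nonneg.
  by rewrite hP; exact: lemx_refl.
exists L; split => //.
  have : lemx 0 L.
    by apply: (mxcvg_ge hL) => k; apply/lemxE; rewrite subr0; exact: Zit_nonneg.
  by move/lemxE; rewrite subr0.
apply: (mxcvg_uniq (Z := fun k => Zit k.+1)); last exact: mxcvgS.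
exact: Phi_cvg.
Qed.

Lemma Psi_le_super Y : nonnegmx Y -> lemx (Phi Y) Y -> lemx Psi Y.
Proof.
move=> hY hPY; have [L [hL hL0 hLf]] := Zit_lim.
apply: (@lemx_trans _ _ _ _ L).
  by case: hPsi => _ _ hmin; apply: hmin => //; exact: fix_Phi.
by apply: (mxcvg_le hL); exact: Zit_le.
Qed.


Lemma Phi_ones Z : nonnegmx Z -> lemx (Z *m ones m) (ones p) ->
  lemx (Phi Z *m ones m) (ones p).
Proof.
move=> hZ hv; set c := (mu *+ 2)^-1.
have E1 : Phi Z *m ones m = c *: (Tpm *m ones m + (Tpp + mu%:M) *m (Z *m ones m)
   + Z *m ((Tmm + mu%:M) *m ones m) + (Z *m Tmp) *m (Z *m ones m)).
  by rewrite /Phi -scalemxAl /c; congr (_ *: _); rewrite !(mulmxDl, mulmxDr, mulmxA).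
rewrite E1.
apply: (@lemx_trans _ _ _ _ (c *: (Tpm *m ones m + (Tpp + mu%:M) *m ones p
   + Z *m ((Tmm + mu%:M) *m ones m) + (Z *m Tmp) *m ones p))).
  apply: lemx_scale; first exact: mu2inv_ge0.
  apply: lemx_add; first apply: lemx_add; first apply: lemx_add.
  - exact: lemx_refl.
  - by apply: lemx_mull => //; exact: Tpp_shift_nonneg.
  - exact: lemx_refl.
  - by apply: lemx_mull => //; apply: nonneg_mul => //; exact: Tmp_nonneg.
have hp : Tpm *m ones m = - (Tpp *m ones p).
  by apply/eqP; rewrite -addr_eq0 addrC rowsum_p.
have hm : Tmp *m ones p = - (Tmm *m ones m).
  by apply/eqP; rewrite -addr_eq0 rowsum_m.
rewrite -(mulmxA Z Tmp) hm hp !mulmxDl mul_scalar_mx mulmxDr mul_scalar_mx.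
rewrite mulmxN -scalemxAr.
apply: (@lemx_trans _ _ _ _ (c *: (mu *: ones p + mu *: ones p))).
  have : lemx (mu *: (Z *m ones m)) (mu *: ones p) by apply: lemx_scale => //; exact: ltW.
  move: (Tpp *m ones p) (Z *m (Tmm *m ones m)) (Z *m ones m) => a b v hv2.
  move=> i j; have := hv2 i j; rewrite !mxE => h.
  apply: ler_wpM2l; first exact: mu2inv_ge0.
  lra.
move=> i j; rewrite !mxE /c.
have : mu != 0 by rewrite gt_eqF.
move=> hm0; suff -> : (mu *+ 2)^-1 * (mu * 1 + mu * 1) = 1 by [].
by field.
Qed.

Lemma Psi_ones : lemx (Psi *m ones m) (ones p).
Proof.
have [L [hL hL0 hLf]] := Zit_lim.
apply: (@lemx_trans _ _ _ _ (L *m ones m)).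
  apply: lemx_mulr; first exact: ones_nonneg.
  by case: hPsi => _ _ hmin; apply: hmin => //; exact: fix_Phi.
have hk : forall k, lemx (Zit k *m ones m) (ones p).
  elim => [|k IH] /=; first by move=> i j; rewrite !mxE big1 // => l _; rewrite mxE mul0r.
  by apply: Phi_ones => //; exact: Zit_nonneg.
apply: (mxcvg_le (Z := fun k => Zit k *m ones m)) => //.
by apply: mxcvgM => //; exact: mxcvg_cst.
Qed.


Lemma ulsub_P (c : R) : ulsubmx (1%:M + c *: T) = 1%:M + c *: Tpp.
Proof. by apply/matrixP => i j; rewrite !mxE eq_lshift. Qed.

Lemma ursub_P (c : R) : ursubmx (1%:M + c *: T) = c *: Tpm.
Proof. by apply/matrixP => i j; rewrite !mxE eq_lrshift mulr0n add0r. Qed.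

Lemma rowsum_1sub n (A : 'M[R]_n) (c : R) i :
  \sum_j (1%:M - c *: A) i j = 1 - c * \sum_j A i j.
Proof.
under eq_bigr do rewrite !mxE.
rewrite sumrB mulr_sumr; congr (_ - _).
rewrite (bigD1 i) //= eqxx big1 ?addr0 // => j /negPf ji.
by rewrite eq_sym ji.
Qed.

Lemma zmx_1sub n (A : 'M[R]_n) (c : R) : 0 <= c ->
  (forall i j, i != j -> 0 <= A i j) -> (forall i, c * \sum_j A i j < 1) ->
  (1%:M - c *: A) \in unitmx /\ nonnegmx (invmx (1%:M - c *: A)).
Proof.
move=> hc hoff hrow.
have offd : forall i j, i != j -> (1%:M - c *: A) i j <= 0.
  move=> i j ij; rewrite !mxE (negPf ij) /= sub0r oppr_le0.
  by apply: mulr_ge0 => //; exact: hoff.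
have rows : forall i, 0 < \sum_j (1%:M - c *: A) i j.
  by move=> i; rewrite rowsum_1sub subr_gt0.
by split; [exact: zmx_unit | exact: zmx_inv_nonneg].
Qed.

Lemma nonneg_1add n (A : 'M[R]_n) (c : R) : 0 < c ->
  (forall i j, i != j -> 0 <= A i j) -> (forall i, - c <= A i i) ->
  nonnegmx (1%:M + c^-1 *: A).
Proof.
move=> hc hoff hd i j; rewrite !mxE; case: (eqVneq i j) => [->|ij] /=.
  have h : 0 <= c^-1 * (A j j + c) by apply: mulr_ge0; [rewrite invr_ge0 ltW | have := hd j; lra].
  by rewrite mulrDr mulVf ?gt_eqF // in h; rewrite mulr1n addrC -(subr_ge0) ; lra.
by rewrite mulr0n add0r; apply: mulr_ge0; [rewrite invr_ge0 ltW | exact: hoff].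
Qed.

Lemma rowsum_ps i : \sum_j Tpp i j + \sum_j Tpm i j = 0.
Proof.
case: hgen => _ h; apply: etrans (h (lshift m i)); rewrite big_split_ord /=.
by congr (_ + _); apply: eq_bigr => k _; rewrite !mxE.
Qed.

Lemma Tpp_offd i j : i != j -> 0 <= Tpp i j.
Proof. by move=> ij; rewrite !mxE; apply: T_offd; rewrite eq_lshift. Qed.

Lemma Tmm_offd i j : i != j -> 0 <= Tmm i j.
Proof. by move=> ij; rewrite !mxE; apply: T_offd; rewrite eq_rshift. Qed.

Local Notation U := (Tmm + Tmp *m Psi).

Lemma U_offd i j : i != j -> 0 <= U i j.
Proof.
move=> ij; rewrite mxE; apply: addr_ge0; first exact: Tmm_offd.
by apply: nonneg_mul; [exact: Tmp_nonneg | exact: Psi_nonneg].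
Qed.

Lemma U_diag i : Tmm i i <= U i i.
Proof.
rewrite [U i i]mxE lerDl; apply: nonneg_mul; [exact: Tmp_nonneg | exact: Psi_nonneg].
Qed.

Lemma U_rows i : \sum_j U i j <= 0.
Proof.
have h : lemx (U *m ones m) 0.
  rewrite mulmxDl -mulmxA -(rowsum_m) [X in lemx _ X]addrC.
  apply: lemx_add; first exact: lemx_refl.
  by apply: lemx_mull; [exact: Tmp_nonneg | exact: Psi_ones].
have := h i ord0; rewrite !mxE.
by rewrite (eq_bigr (fun j => U i j)) // => j _; rewrite [const_mx _ _ _]mxE mulr1.
Qed.

Lemma Mp_inv : (1%:M - mu^-1 *: Tpp) \in unitmx /\ nonnegmx (invmx (1%:M - mu^-1 *: Tpp)).
Proof.
apply: zmx_1sub; [by rewrite invr_ge0 ltW | exact: Tpp_offd |] => i.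
have h := rowsum_ps i.
have h2 : 0 <= \sum_j Tpm i j by apply: sumr_ge0 => j _; exact: Tpm_nonneg.
have -> : \sum_j Tpp i j = - \sum_j Tpm i j by lra.
have : 0 <= mu^-1 * \sum_j Tpm i j by apply: mulr_ge0 => //; rewrite invr_ge0 ltW.
rewrite mulrN; lra.
Qed.

Lemma Ml_inv : (1%:M - lam^-1 *: U) \in unitmx /\ nonnegmx (invmx (1%:M - lam^-1 *: U)).
Proof.
apply: zmx_1sub; [by rewrite invr_ge0 ltW | exact: U_offd |] => i.
have : lam^-1 * \sum_j U i j <= 0.
  by apply: mulr_ge0_le0; [rewrite invr_ge0 ltW | exact: U_rows].
lra.
Qed.


Local Notation K := (invmx (1%:M - mu^-1 *: Tpp)).
Local Notation X := (K *m ulsubmx (1%:M + lam^-1 *: T)).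
Local Notation Ap := (K *m ursubmx (1%:M + lam^-1 *: T)).
Local Notation Bp := (K *m ursubmx (1%:M + mu^-1 *: T)).
Local Notation W := ((1%:M + mu^-1 *: U) *m invmx (1%:M - lam^-1 *: U)).

Definition F (Z : 'M[R]_(p,m)) := X *m Z *m W + Ap *m W + Bp.

Lemma X_nonneg : nonnegmx X.
Proof.
apply: nonneg_mul; first exact: Mp_inv.2.
rewrite ulsub_P; apply: nonneg_1add => //; first exact: Tpp_offd.
by move=> i; rewrite !mxE; exact: T_diag_lam.
Qed.

Lemma A_nonneg : nonnegmx Ap.
Proof.
apply: nonneg_mul; first exact: Mp_inv.2.
by rewrite ursub_P; apply: nonneg_scale; [rewrite invr_ge0 ltW | exact: Tpm_nonneg].
Qed.

Lemma B_nonneg : nonnegmx Bp.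
Proof.
apply: nonneg_mul; first exact: Mp_inv.2.
by rewrite ursub_P; apply: nonneg_scale; [rewrite invr_ge0 ltW | exact: Tpm_nonneg].
Qed.

Lemma W_nonneg : nonnegmx W.
Proof.
apply: nonneg_mul; last exact: Ml_inv.2.
apply: nonneg_1add => //; first exact: U_offd.
move=> i; apply: le_trans (U_diag i); rewrite !mxE; exact: T_diag_mu.
Qed.

Lemma key Z : (1%:M - mu^-1 *: Tpp) *m (F Z - Z) *m (1%:M - lam^-1 *: U)
  = (lam^-1 + mu^-1) *: (Tpm + Tpp *m Z + Z *m U).
Proof.
have hMp := Mp_inv.1; have hMl := Ml_inv.1.
rewrite /F; move: hMp hMl.
move EMp: (1%:M - mu^-1 *: Tpp) => Mv; move EMl: (1%:M - lam^-1 *: U) => Nv hMp hMl.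
rewrite !(mulmxBr, mulmxDr, mulmxBl, mulmxDl) !mulmxA.
rewrite !(mulmxV hMp) !(mulmxKV hMl) !mul1mx ulsub_P !ursub_P -EMp -EMl.
do 3! rewrite ?(mulmxBr, mulmxDr, mulmxBl, mulmxDl, mul1mx, mulmx1, mulmxN, mulNmx,
  scalerA, mulmxA) -?scalemxAl -?scalemxAr.
move: (Tpp *m Z *m Tmp *m Psi) => a1; move: (Tpp *m Z *m Tmm) => a2.
move: (Z *m Tmp *m Psi) => a3; move: (Z *m Tmm) => a4; move: (Tpp *m Z) => a5.
move: (Tpm *m Tmp *m Psi) => a6; move: (Tpm *m Tmm) => a7.
apply/matrixP => i j; rewrite !mxE; ring.
Qed.


Lemma lm_gt0 : 0 < lam^-1 + mu^-1.
Proof. by apply: addr_gt0; rewrite invr_gt0. Qed.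

Lemma sylv_F Z : F Z = Z -> Tpm + Tpp *m Z + Z *m U = 0.
Proof.
move=> h; have := key Z; rewrite h subrr mulmx0 mul0mx => /esym/eqP.
by rewrite scaler_eq0 (gt_eqF lm_gt0) /= => /eqP.
Qed.

Lemma F_sylv Z : Tpm + Tpp *m Z + Z *m U = 0 -> F Z = Z.
Proof.
move=> h; have hMp := Mp_inv.1; have hMl := Ml_inv.1.
have E : F Z - Z = invmx (1%:M - mu^-1 *: Tpp) *m
   ((1%:M - mu^-1 *: Tpp) *m (F Z - Z) *m (1%:M - lam^-1 *: U)) *m
   invmx (1%:M - lam^-1 *: U).
  by rewrite !mulmxA (mulVmx hMp) mul1mx (mulmxK hMl).
by apply/eqP; rewrite -subr_eq0 E key h scaler0 mulmx0 mul0mx.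
Qed.

Lemma Psi_sylv : Tpm + Tpp *m Psi + Psi *m U = 0.
Proof.
case: hPsi => _ hr _; move: hr; rewrite /riccati mulmxDr mulmxA => <-.
move: (Psi *m Tmp *m Psi) (Tpp *m Psi) (Psi *m Tmm) => a b c.
by apply/matrixP => i j; rewrite !mxE; ring.
Qed.

Lemma Psi_F : F Psi = Psi.
Proof. exact: F_sylv Psi_sylv. Qed.

Lemma F_mono Z1 Z2 : lemx Z1 Z2 -> lemx (F Z1) (F Z2).
Proof.
move=> h; apply: lemx_add; last exact: lemx_refl.
apply: lemx_add; last exact: lemx_refl.
apply: lemx_mulr; first exact: W_nonneg.
by apply: lemx_mull; first exact: X_nonneg.
Qed.

Lemma F_cvg Z L : mxcvg Z L -> mxcvg (fun k => F (Z k)) (F L).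
Proof.
move=> h; apply: mxcvgD; first apply: mxcvgD.
- by apply: mxcvgM; [apply: mxcvgM; [exact: mxcvg_cst | exact: h] | exact: mxcvg_cst].
- exact: mxcvg_cst.
- exact: mxcvg_cst.
Qed.

Fixpoint mpow n (A : 'M[R]_n) k : 'M[R]_n :=
  if k is k'.+1 then mpow A k' *m A else 1%:M.

Lemma mpowSl n (A : 'M[R]_n) k : mpow A k.+1 = A *m mpow A k.
Proof.
elim: k => [|k IH] /=; first by rewrite mul1mx mulmx1.
by transitivity (mpow A k.+1 *m A) => //; rewrite IH -mulmxA.
Qed.

Lemma mpow_nonneg n (A : 'M[R]_n) k : nonnegmx A -> nonnegmx (mpow A k).
Proof.
move=> h; elim: k => [|k IH] /=; last exact: nonneg_mul.
by move=> i j; rewrite mxE; case: (i == j).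
Qed.



Definition S N := \sum_(j < N) mpow X j *m (Ap *m W + Bp) *m mpow W j.

Lemma S_succ N : S N.+1 = F (S N).
Proof.
rewrite /S /F big_ord_recl mul1mx mulmx1 [LHS]addrC -[RHS]addrA; congr (_ + _).
rewrite mulmx_sumr mulmx_suml; apply: eq_bigr => j _.
rewrite lift0 mpowSl -[mpow W j.+1]/(mpow W j *m W) !mulmxA.
done.
Qed.

Lemma S_le N : lemx (S N) Psi.
Proof.
elim: N => [|N IH].
  rewrite /S big_ord0; apply/lemxE; rewrite subr0; exact: Psi_nonneg.
rewrite S_succ -Psi_F; exact: F_mono.
Qed.


Lemma term_nonneg j : nonnegmx (mpow X j *m (Ap *m W + Bp) *m mpow W j).
Proof.
apply: nonneg_mul; last exact: mpow_nonneg W_nonneg.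
apply: nonneg_mul; first exact: mpow_nonneg X_nonneg.
apply: nonneg_add; last exact: B_nonneg.
apply: nonneg_mul; [exact: A_nonneg | exact: W_nonneg].
Qed.

Lemma S_incr N : lemx (S N) (S N.+1).
Proof.
rewrite /S big_ord_recr /=; apply/lemxE; rewrite addrAC subrr add0r; exact: term_nonneg.
Qed.

Lemma S_cvg : mxcvg S Psi.
Proof.
have [G hG] := mono_mxcvg S_incr S_le.
suff -> : Psi = G by [].
have hGF : F G = G.
  apply: (mxcvg_uniq (Z := fun k => S k.+1)); last exact: mxcvgS.
  by under [fun k => S k.+1]funext do rewrite S_succ; exact: F_cvg.
have hG0 : nonnegmx G.
  have : lemx 0 G.
    apply: (mxcvg_ge hG) => k; apply/lemxE; rewrite subr0.
    by move=> i j; rewrite /S summxE; apply: sumr_ge0 => l _; exact: term_nonneg.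
  by move/lemxE; rewrite subr0.
have hGP : lemx G Psi by apply: (mxcvg_le hG); exact: S_le.
apply: lemx_antisym => //.
apply: Psi_le_super => //.
have hs := sylv_F hGF.
have e : ric G = (Tpm + Tpp *m G + G *m U) + (G *m Tmp *m G - G *m Tmp *m Psi).
  rewrite /ric mulmxDr mulmxA.
  move: (G *m Tmp *m G) (G *m Tmp *m Psi) (Tpp *m G) (G *m Tmm) => a b c d.
  by apply/matrixP => i j; rewrite !mxE; ring.
rewrite Phi_ric e hs add0r.
have hle : lemx (G *m Tmp *m G) (G *m Tmp *m Psi).
  by apply: lemx_mull => //; apply: nonneg_mul => //; exact: Tmp_nonneg.
move=> i j; have := hle i j; rewrite !mxE => h.
rewrite gerDl; apply: mulr_ge0_le0; first exact: mu2inv_ge0.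
by rewrite subr_le0.
Qed.

End Main.

End M_C.
Import M_C.

Module M_D.
Set Implicit Arguments. Unset Strict Implicit. Unset Printing Implicit Defensive.
Import numFieldNormedType.Exports.

Section Tab.
Variables (R : realType) (p m : nat) (X : 'M[R]_p) (Ap Bp : 'M[R]_(p,m)) (W : 'M[R]_m).

Local Notation Am1 := (block_mx 0 Bp 0 W : 'M[R]_(p + m)).
Local Notation A0 := (block_mx 0 Ap 0 0 : 'M[R]_(p + m)).
Local Notation A1 := (block_mx X 0 0 0 : 'M[R]_(p + m)).

Definition bb n l : 'M[R]_(p,m) :=
  if (l < n)%N then
    (if odd (n + l) then mpow X (n + l)./2 *m Ap *m mpow W (n.-1 - (n + l)./2)
     else mpow X (n + l)./2 *m Bp *m mpow W (n.-1 - (n + l)./2))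
  else 0.

Lemma taboo_form n l : taboo Am1 A0 A1 n l =
  block_mx (if l == n then mpow X n else 0) (bb n l) 0
           (if (n == 0%N) && (l == 0%N) then 1%:M else 0).
Proof.
elim: n l => [|n IH] l.
  rewrite /= /bb /=; case: (l == 0%N); first by rewrite -scalar_mx_block.
  by rewrite block_mx0.
rewrite [taboo _ _ _ n.+1 l]/= !IH.
have -> : (if l is l'.+1 then taboo Am1 A0 A1 n l' *m A1 else 0) =
   block_mx (if l is l'.+1 then (if l' == n then mpow X n.+1 else 0) else 0) 0 0 0.
  case: l => [|l]; first by rewrite block_mx0.
  rewrite IH mulmx_block !mulmx0 !addr0 !mul0mx.
  by case: (l == n) => //; rewrite mul0mx.
rewrite !mulmx_block !add_block_mx !mulmx0 !mul0mx !addr0 !add0r.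
congr block_mx.
- by case: l => [|l] //=.
- rewrite /bb; have [lt|gt|eq] := ltngtP l.+1 n.
  + try (have -> : (l == n) = false by lia).
    try (have -> : (l.+1 == n) = false by lia).
    try (have -> : (l < n.+1)%N = true by lia).
    rewrite !mul0mx !add0r addSnnS /=.
    set j := (n + l.+1)./2.
    have e : (n - j = (n.-1 - j).+1)%N by rewrite /j; lia.
    by case: (odd _); rewrite e /= !mulmxA.
  + case: (eqVneq l n) => [->|ne].
      try (have -> : (n.+1 == n) = false by lia).
      try (have -> : (n.+1 < n)%N = false by lia).
      try (have -> : (n < n.+1)%N = true by lia).
      try (have -> : odd (n.+1 + n) = true by lia).
      try (have -> : (n.+1 + n)./2 = n by lia).
      by rewrite [n.+1.-1]/= subnn !mul0mx mulmx1 !addr0.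
    try (have -> : (l.+1 == n) = false by lia).
    try (have -> : (l.+1 < n)%N = false by lia).
    try (have -> : (l < n.+1)%N = false by lia).
    by rewrite !mul0mx !addr0.
  + subst n.
    try (have -> : (l == l.+1) = false by lia).
    try (have -> : (l.+1 < l.+1)%N = false by lia).
    try (have -> : (l < l.+2)%N = true by lia).
    try (have -> : odd (l.+2 + l) = false by lia).
    try (have -> : (l.+2 + l)./2 = l.+1 by lia).
    by rewrite [l.+2.-1]/= subnn !mul0mx mulmx1 add0r addr0.
- by case: (n == 0%N) => /=; rewrite mul0mx.
Qed.


Definition hh n : 'M[R]_(p,m) :=
  if odd n then mpow X n./2 *m Ap *m mpow W (n./2).+1
  else mpow X n./2 *m Bp *m mpow W n./2.

Lemma fp_form n : first_passage Am1 A0 A1 n =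
  block_mx 0 (hh n) 0 (if n == 0%N then W else 0).
Proof.
rewrite /first_passage taboo_form mulmx_block !mulmx0 !mul0mx !addr0 !add0r.
congr block_mx.
- case: n => [|n]; first by rewrite /hh /bb /= mul0mx addr0 mulmx1.
  rewrite /hh /bb addn0.
  have -> : (0 == n.+1) = false by [].
  have -> : (0 < n.+1)%N = true by [].
  rewrite mul0mx add0r; set j := (n.+1)./2.
  case ho: (odd n.+1).
    have e : (n.+1.-1 - j)%N = j by rewrite /j; lia.
    by rewrite e -mulmxA.
  have e : (n.+1.-1 - j).+1%N = j by rewrite /j; lia.
  rewrite -mulmxA; congr (_ *m _).
  by transitivity (mpow W (n.+1.-1 - j).+1); [by [] | rewrite e].
- by case: (n == 0%N); rewrite /= ?mul1mx ?mul0mx.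
Qed.

Definition Sg N := \sum_(j < N) mpow X j *m (Ap *m W + Bp) *m mpow W j.

Lemma sum_block a b c d N (fa : nat -> 'M[R]_(a,c)) (fb : nat -> 'M[R]_(a,d))
  (fc : nat -> 'M[R]_(b,c)) (fd : nat -> 'M[R]_(b,d)) :
  \sum_(n < N) block_mx (fa n) (fb n) (fc n) (fd n) =
  block_mx (\sum_(n < N) fa n) (\sum_(n < N) fb n) (\sum_(n < N) fc n) (\sum_(n < N) fd n).
Proof.
elim: N => [|N IH]; first by rewrite !big_ord0 block_mx0.
by rewrite !big_ord_recr /= IH add_block_mx.
Qed.

Lemma sum_hh N : \sum_(n < N.*2) hh n = Sg N.
Proof.
elim: N => [|N IH]; first by rewrite /Sg !big_ord0.
rewrite doubleS !big_ord_recr /= IH /Sg big_ord_recr /=; rewrite -addrA; congr (_ + _).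
rewrite /hh.
have -> : odd N.*2 = false by lia.
have -> : odd N.*2.+1 = true by lia.
have -> : (N.*2)./2 = N by lia.
have -> : (N.*2.+1)./2 = N by lia.
by rewrite mulmxDr mulmxDl addrC mpowSl !mulmxA.
Qed.

Lemma sum_W N : \sum_(n < N.+1) (if nat_of_ord n == 0%N then W else 0) = W.
Proof. by rewrite big_ord_recl /= big1 ?addr0. Qed.

Lemma sum_fp N : \sum_(n < (N.+1).*2) first_passage Am1 A0 A1 n =
  block_mx 0 (Sg N.+1) 0 W.
Proof.
under eq_bigr do rewrite fp_form.
rewrite (sum_block _ (fun _ => 0) hh (fun _ => 0) (fun n => if n == 0%N then W else 0)).
rewrite sum_hh doubleS sum_W !big1 //.
Qed.


End Tab.

Lemma nonneg_block (R : realType) a b c d (A : 'M[R]_(a,c)) (B : 'M[R]_(a,d))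
  (C : 'M[R]_(b,c)) (D : 'M[R]_(b,d)) :
  nonnegmx A -> nonnegmx B -> nonnegmx C -> nonnegmx D -> nonnegmx (block_mx A B C D).
Proof.
move=> hA hB hC hD i j.
case: (split_ordP i) => i' ->; case: (split_ordP j) => j' ->;
  by rewrite ?block_mxEul ?block_mxEur ?block_mxEdl ?block_mxEdr.
Qed.

Lemma mxcvg_block (R : realType) a b c d (A : nat -> 'M[R]_(a,c)) (B : nat -> 'M[R]_(a,d))
  (C : nat -> 'M[R]_(b,c)) (D : nat -> 'M[R]_(b,d)) LA LB LC LD :
  mxcvg A LA -> mxcvg B LB -> mxcvg C LC -> mxcvg D LD ->
  mxcvg (fun k => block_mx (A k) (B k) (C k) (D k)) (block_mx LA LB LC LD).
Proof.
move=> hA hB hC hD i j.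
case: (split_ordP i) => i' ->; case: (split_ordP j) => j' ->.
- by rewrite block_mxEul; under eq_cvg do rewrite block_mxEul; exact: hA.
- by rewrite block_mxEur; under eq_cvg do rewrite block_mxEur; exact: hB.
- by rewrite block_mxEdl; under eq_cvg do rewrite block_mxEdl; exact: hC.
- by rewrite block_mxEdr; under eq_cvg do rewrite block_mxEdr; exact: hD.
Qed.


End M_D.
Import M_D.

Theorem lemma3 (R : realType) (p m : nat) (T : 'M[R]_(p + m))
  (Psi : 'M[R]_(p, m)) (lam mu : R) :
  (0 < p)%N -> (0 < m)%N ->
  is_generator T ->
  minimal_nonneg_sol T Psi ->
  0 < lam -> 0 < mu ->
  (forall i, `|T i i| <= lam) -> (forall i, `|T i i| <= mu) ->
  let U := drsubmx T + dlsubmx T *m Psi in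
  let Plam := 1%:M + lam^-1 *: T in
  let Pmu := 1%:M + mu^-1 *: T in
  let W := (1%:M + mu^-1 *: U) *m invmx (1%:M - lam^-1 *: U) in
  let K := invmx (1%:M - mu^-1 *: ulsubmx T) in
  is_Gmatrix
    (block_mx 0 (K *m ursubmx Pmu) 0 W)
    (block_mx 0 (K *m ursubmx Plam) 0 0)
    (block_mx (K *m ulsubmx Plam) 0 0 0)
    (block_mx 0 Psi 0 W).
Proof.
move=> _ _ hgen hPsi hlam hmu hTl hTm U Plam Pmu W K i j.
have hX : nonnegmx (K *m ulsubmx Plam) by apply: X_nonneg.
have hA : nonnegmx (K *m ursubmx Plam) by apply: A_nonneg.
have hB : nonnegmx (K *m ursubmx Pmu) by apply: B_nonneg.
have hW : nonnegmx W by apply: W_nonneg.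
have hS : mxcvg (S T Psi lam mu) Psi by apply: S_cvg.
apply: mono_subseq.
  move=> N; rewrite big_ord_recr /= lerDl.
  rewrite fp_form; apply: nonneg_block => //; try exact: nonneg0.
    by rewrite /hh; case: (odd N); repeat apply: nonneg_mul => //; apply: mpow_nonneg.
  by case: (N == 0%N) => //; exact: nonneg0.
have E : forall N, \sum_(n < (N.+1).*2) first_passage
    (block_mx 0 (K *m ursubmx Pmu) 0 W) (block_mx 0 (K *m ursubmx Plam) 0 0)
    (block_mx (K *m ulsubmx Plam) 0 0 0) n i j
  = block_mx 0 (S T Psi lam mu N.+1) 0 W i j.
  by move=> N; rewrite -summxE sum_fp.
under eq_cvg do rewrite E.
apply: (mxcvg_block (A := fun _ => 0) (C := fun _ => 0) (D := fun _ => W)).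
- exact: mxcvg_cst.
- exact: mxcvgS.
- exact: mxcvg_cst.
- exact: mxcvg_cst.
Qed.
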